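(* Let $m,n\ge 5$ be integers and let $C_m\Box C_n$ be the torus grid graph. Then its disjunctive domination number satisfies $$\frac{mn}{9}\le \gamma_2^d(C_m\Box C_n)\le 2\left\lceil \frac{m}{4}\right\rceil\cdot\left\lceil \frac{n}{4}\right\rceil.$$
   Context: $C_k$ denotes the cycle on $k$ vertices, and $G\Box H$ is the Cartesian product: vertex set $V(G)\times V(H)$, with $(g,h)\sim(g',h')$ iff either $g=g'$ and $hh'\in E(H)$, or $h=h'$ and $gg'\in E(G)$. For a simple graph $\Gamma$ and a vertex $v$, let $\Gamma(v)$ be the set of vertices at distance $1$ from $v$ and $\Gamma_2(v)$ the set of vertices at distance exactly $2$ from $v$. A set $S\subseteq V(\Gamma)$ is a disjunctive dominating set if every vertex $v\notin S$ satisfies $|\Gamma(v)\cap S|\ge 1$ or $|\Gamma_2(v)\cap S|\ge 2$. The disjunctive domination number $\gamma_2^d(\Gamma)$ is the minimum cardinality of a disjunctive dominating set of $\Gamma$. *)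

(* Defs.v *)
From mathcomp Require Import all_boot.
Set Implicit Arguments. Unset Strict Implicit. Unset Printing Implicit Defensive.

(* A simple graph is a symmetric irreflexive relation [adj] on a finite type. *)
Section Disj.
Variables (T : finType) (adj : rel T).

Definition nbhd1 (v : T) : {set T} := [set u | adj v u].

Definition nbhd2 (v : T) : {set T} :=
  [set u | [&& u != v, ~~ adj v u & [exists w, adj v w && adj w u]]].

Definition disjunctive_dominating (S : {set T}) : bool :=
  [forall v, (v \notin S) ==>
     ((1 <= #|nbhd1 v :&: S|) || (2 <= #|nbhd2 v :&: S|))].

(* Minimum cardinality of a disjunctive dominating set
   (the whole vertex set is always one, so #|T| is a valid default). *)
Definition gamma2d : nat :=
  \big[minn/#|T|]_(S : {set T} | disjunctive_dominating S) #|S|.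
End Disj.

Definition cycle_adj (k : nat) : rel 'I_k :=
  fun i j => (j == (i.+1 %% k) :> nat) || (i == (j.+1 %% k) :> nat).

Definition cart_adj (A B : finType) (ea : rel A) (eb : rel B) : rel (A * B) :=
  fun x y => ((x.1 == y.1) && eb x.2 y.2) || ((x.2 == y.2) && ea x.1 y.1).

Definition torus_adj (m n : nat) : rel ('I_m * 'I_n) :=
  cart_adj (@cycle_adj m) (@cycle_adj n).
Arguments torus_adj m n : clear implicits.
Arguments gamma2d T adj : clear implicits.

Definition ceil_div (m d : nat) : nat := (m + d.-1) %/ d.

(* Main.v *)
Require Import Defs.
From mathcomp Require Import all_boot.
From mathcomp Require Import zify.
Set Implicit Arguments. Unset Strict Implicit. Unset Printing Implicit Defensive.

Lemma mod_cases x K : 0 < K -> x < K.*2 -> (x < K /\ x %% K = x) \/ (K <= x /\ x %% K = x - K).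
Proof.
move=> K0 xK; case: (ltnP x K) => h; [left; split=> //; exact: modn_small|right; split=> //].
have {1}-> : x = (x - K) + K by lia.
rewrite modnDr modn_small //; lia.
Qed.

Lemma mod_hi x K : K <= x -> x < K.*2 -> x %% K = x - K.
Proof. move=> h1 h2; have [[]|[]] := @mod_cases x K ltac:(lia) h2 => //; lia. Qed.

Ltac elim_mod := repeat match goal with
  | |- context [?x %% ?K] => lazymatch K with 4 => fail | _ =>
      first [ rewrite (@modn_small x K); last by lia
            | rewrite (@mod_hi x K); [|by lia|by lia]
            | destruct (@mod_cases x K ltac:(lia) ltac:(lia)) as [[? ->]|[? ->]] ] end
  end.

Definition rot (k o : nat) (i : 'I_k.+1) : 'I_k.+1 := inord ((i + o) %% k.+1).

Section Rot.
Variable k : nat.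
Implicit Types i j : 'I_k.+1.

Lemma rotE o i : nat_of_ord (rot o i) = (i + o) %% k.+1.
Proof. by rewrite /rot inordK // ltn_pmod. Qed.

Lemma rot0 i : rot 0 i = i.
Proof. by apply: val_inj; rewrite /= rotE addn0 modn_small. Qed.

Lemma rot_rot o o' i : rot o (rot o' i) = rot (o' + o) i.
Proof. by apply: val_inj; rewrite /= !rotE modnDml addnA. Qed.

Lemma rot_addK o i : rot (o + k.+1) i = rot o i.
Proof. by apply: val_inj; rewrite /= !rotE addnA modnDr. Qed.

Lemma rot_eqE o o' i : (rot o i == rot o' i) = (o == o' %[mod k.+1]).
Proof. by rewrite -val_eqE /= !rotE eqn_modDl. Qed.

Lemma cycle_adjP i j : cycle_adj i j = (j == rot 1 i) || (j == rot k i).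
Proof.
rewrite /cycle_adj -!val_eqE /= !rotE.
have := ltn_ord i; have := ltn_ord j.
move: (nat_of_ord i) (nat_of_ord j) => x y hy hx.
elim_mod; lia.
Qed.
End Rot.

Section Count.
Variable T : finType.
Variable N : T -> {set T}.
Hypothesis Nsym : forall u v, (u \in N v) = (v \in N u).

Lemma sum_card_N (S : {set T}) c : (forall u, #|N u| <= c) ->
  \sum_v #|N v :&: S| <= c * #|S|.
Proof.
move=> hc.
have E : forall v, #|N v :&: S| = \sum_(u in S) (u \in N v : nat).
  move=> v; rewrite -sum1_card big_mkcond /= [RHS]big_mkcond /=.
  by apply: eq_bigr => u _; rewrite !inE andbC; case: (u \in S); case: (u \in N v).
rewrite (eq_bigr _ (fun v _ => E v)) exchange_big /=.
rewrite mulnC -sum_nat_const; apply: leq_sum => u uS.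
rewrite (eq_bigr (fun v => (v \in N u : nat))) => [|v _]; last by rewrite Nsym.
by rewrite -big_mkcond /= sum1_card (leq_trans _ (hc u)).
Qed.
End Count.

Section Torus.
Variables p q : nat.
Hypothesis hp : 4 <= p.
Hypothesis hq : 4 <= q.

Local Notation T := ('I_p.+1 * 'I_q.+1)%type.
Local Notation adj := (torus_adj p.+1 q.+1).

Definition P (v : T) o1 o2 : T := (rot o1 v.1, rot o2 v.2).
Arguments P : simpl never.

Lemma P00 v : P v 0 0 = v.
Proof. by case: v => a b; rewrite /P /= !rot0. Qed.

Lemma P_P v o1 o2 o1' o2' : P (P v o1 o2) o1' o2' = P v (o1 + o1') (o2 + o2').
Proof. by rewrite /P /= !rot_rot. Qed.

Lemma P_eqE v s1 s2 t1 t2 :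
  (P v s1 s2 == P v t1 t2) = (s1 == t1 %[mod p.+1]) && (s2 == t2 %[mod q.+1]).
Proof. by rewrite /P xpair_eqE !rot_eqE. Qed.

Lemma adj_sym x y : adj x y = adj y x.
Proof.
have cs : forall k (i j : 'I_k), cycle_adj i j = cycle_adj j i by move=> k i j; rewrite /cycle_adj orbC.
by rewrite /torus_adj /cart_adj (cs _ x.2) (cs _ x.1) (eq_sym x.1) (eq_sym x.2).
Qed.

Lemma adjE v s1 s2 t1 t2 : adj (P v s1 s2) (P v t1 t2) =
  ((s1 == t1 %[mod p.+1]) && ((t2 == s2 + 1 %[mod q.+1]) || (t2 == s2 + q %[mod q.+1])))
  || ((s2 == t2 %[mod q.+1]) && ((t1 == s1 + 1 %[mod p.+1]) || (t1 == s1 + p %[mod p.+1]))).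
Proof. by rewrite /torus_adj /cart_adj /= !cycle_adjP !rot_rot !rot_eqE. Qed.

Lemma nbr v x : adj v x -> exists2 o, o \in [:: (1,0); (p,0); (0,1); (0,q)] & x = P v o.1 o.2.
Proof.
case: v x => a b [x1 x2]; rewrite /torus_adj /cart_adj /= !cycle_adjP.
case/orP => /andP [/eqP <-] /orP [] /eqP ->.
- by exists (0,1); [rewrite !inE eqxx ?orbT | rewrite /P /= rot0].
- by exists (0,q); [rewrite !inE eqxx ?orbT | rewrite /P /= rot0].
- by exists (1,0); [rewrite !inE eqxx ?orbT | rewrite /P /= rot0].
- by exists (p,0); [rewrite !inE eqxx ?orbT | rewrite /P /= rot0].
Qed.

Definition L4 v := [:: P v 1 0; P v p 0; P v 0 1; P v 0 q].
Definition L8 v := [:: P v 2 0; P v p.-1 0; P v 0 2; P v 0 q.-1; P v 1 1; P v 1 q; P v p 1; P v p q].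

Lemma N1_sub v : nbhd1 adj v \subset L4 v.
Proof.
apply/subsetP => x; rewrite inE => /nbr [o oin ->]; move: oin; rewrite !inE.
by case/or4P => /eqP ->; rewrite /= eqxx ?orbT.
Qed.

Lemma N2_sub v : nbhd2 adj v \subset L8 v.
Proof.
apply/subsetP => x; rewrite inE => /and3P [xv _ /existsP [w /andP [/nbr [o oin ->] /nbr [o' o'in xe]]]].
subst x; move: xv; rewrite P_P -{2}(P00 v) P_eqE /L8 !inE !P_eqE.
move: oin o'in; rewrite !inE.
by case/or4P => /eqP -> ; case/or4P => /eqP -> /=; elim_mod; lia.
Qed.


Lemma N1_card v : #|nbhd1 adj v| <= 4.
Proof. exact: leq_trans (subset_leq_card (N1_sub v)) (card_size _). Qed.

Lemma N2_card v : #|nbhd2 adj v| <= 8.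
Proof. exact: leq_trans (subset_leq_card (N2_sub v)) (card_size _). Qed.

Lemma N1_sym u v : (u \in nbhd1 adj v) = (v \in nbhd1 adj u).
Proof. by rewrite !inE adj_sym. Qed.

Lemma N2_sym u v : (u \in nbhd2 adj v) = (v \in nbhd2 adj u).
Proof.
rewrite !inE eq_sym adj_sym; congr [&& _, _ & _].
apply/existsP/existsP => [] [w /andP [h1 h2]]; exists w; apply/andP; split; rewrite adj_sym //.
Qed.

Lemma lower (S : {set T}) : disjunctive_dominating adj S -> p.+1 * q.+1 <= 9 * #|S|.
Proof.
move=> /forallP dom.
have H : forall v, 2 <= (v \in S) + (v \in S) + #|nbhd1 adj v :&: S| + #|nbhd1 adj v :&: S| + #|nbhd2 adj v :&: S|.
  move=> v; case vS: (v \in S) => //.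
  move: (dom v); rewrite vS /= => /orP [h|h]; lia.
have : \sum_(v : T) 2 <= \sum_(v : T) ((v \in S) + (v \in S) + #|nbhd1 adj v :&: S| + #|nbhd1 adj v :&: S| + #|nbhd2 adj v :&: S|).
  by apply: leq_sum => v _; exact: H.
rewrite sum_nat_const card_prod !card_ord !big_split /=.
have e1 : \sum_(v : T) (v \in S : nat) = #|S|.
  by rewrite -sum1_card [RHS]big_mkcond.
have e2 : \sum_(v : T) #|nbhd1 adj v :&: S| <= 4 * #|S| := sum_card_N N1_sym S N1_card.
have e3 : \sum_(v : T) #|nbhd2 adj v :&: S| <= 8 * #|S| := sum_card_N N2_sym S N2_card.
rewrite e1 => h1; have := leq_trans h1 (leq_add (leq_add (leq_add (leqnn (#|S| + #|S|)) e2) e2) e3).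
set s := #|S|. lia.
Qed.


Definition offK (k d : nat) := nth 0 [:: 0; 1; k; 2; k.-1] d.

Definition sb (r c : nat -> bool * bool) d1 d2 :=
  ((r d1).1 && (c d2).1) || ((r d1).2 && (c d2).2).

Definition L8i := [:: (3,0); (4,0); (0,3); (0,4); (1,1); (1,2); (2,1); (2,2)].

Definition F (r c : nat -> bool * bool) : bool :=
  [|| sb r c 0 0, sb r c 1 0, sb r c 2 0, sb r c 0 1, sb r c 0 2
    | 1 < count (fun x => sb r c x.1 x.2) L8i].

Lemma inN2 v s1 s2 w1 w2 : ~~ (P v s1 s2 == P v 0 0) -> ~~ adj (P v 0 0) (P v s1 s2) ->
  adj (P v 0 0) (P v w1 w2) -> adj (P v w1 w2) (P v s1 s2) -> P v s1 s2 \in nbhd2 adj v.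
Proof.
rewrite P00 => h1 h2 h3 h4; rewrite inE h1 h2 /=; apply/existsP; exists (P v w1 w2).
by rewrite h3 h4.
Qed.

Lemma inN1 v s1 s2 : adj (P v 0 0) (P v s1 s2) -> P v s1 s2 \in nbhd1 adj v.
Proof. by rewrite P00 inE. Qed.

Ltac arith := rewrite ?P_eqE ?adjE /=; elim_mod; lia.

Lemma dom_gen (v : T) (A0 A1 : {set 'I_p.+1}) (B0 B1 : {set 'I_q.+1}) :
  let S := setX A0 B0 :|: setX A1 B1 in
  let r := fun d => (rot (offK p d) v.1 \in A0, rot (offK p d) v.1 \in A1) in
  let c := fun d => (rot (offK q d) v.2 \in B0, rot (offK q d) v.2 \in B1) in
  F r c -> (v \notin S) ==> ((1 <= #|nbhd1 adj v :&: S|) || (2 <= #|nbhd2 adj v :&: S|)).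
Proof.
move=> S r c.
have memS : forall d1 d2, (P v (offK p d1) (offK q d2) \in S) = sb r c d1 d2.
  by move=> d1 d2; rewrite !inE.
have n1 : forall d1 d2, P v (offK p d1) (offK q d2) \in S -> P v (offK p d1) (offK q d2) \in nbhd1 adj v ->
   1 <= #|nbhd1 adj v :&: S|.
  by move=> d1 d2 h1 h2; apply/card_gt0P; exists (P v (offK p d1) (offK q d2)); rewrite inE h1 h2.
rewrite /F -!memS P00 => /or4P [->//|h|h|/orP [h|/orP[h|h]]]; apply/implyP => _.
- by rewrite (n1 1 0) //; apply: inN1; arith.
- by rewrite (n1 2 0) //; apply: inN1; arith.
- by rewrite (n1 0 1) //; apply: inN1; arith.
- by rewrite (n1 0 2) //; apply: inN1; arith.
apply/orP; right.
set s8 := [seq P v (offK p x.1) (offK q x.2) | x <- L8i].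
have us : uniq s8.
  rewrite /s8 /offK /= !in_cons in_nil !orbF.
  repeat (apply/andP; split); rewrite ?negb_or; repeat (apply/andP; split); arith.
have cnt : count (mem S) s8 = count (fun x => sb r c x.1 x.2) L8i.
  by rewrite /s8 count_map; apply: eq_count => x /=; rewrite memS.
rewrite -cnt -size_filter in h.
apply: (leq_trans h).
rewrite -(card_uniqP _) ?filter_uniq //.
apply/subset_leq_card/subsetP => x; rewrite mem_filter => /andP [xS xs].
rewrite inE; apply/andP; split; last exact: xS; move: xs; rewrite /s8 /offK /= !in_cons in_nil orbF.
case/orP => [/eqP -> | ]. by apply: (inN2 (w1 := 1) (w2 := 0)); arith.
case/orP => [/eqP -> | ]. by apply: (inN2 (w1 := p) (w2 := 0)); arith.
case/orP => [/eqP -> | ]. by apply: (inN2 (w1 := 0) (w2 := 1)); arith.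
case/orP => [/eqP -> | ]. by apply: (inN2 (w1 := 0) (w2 := q)); arith.
case/orP => [/eqP -> | ]. by apply: (inN2 (w1 := 1) (w2 := 0)); arith.
case/orP => [/eqP -> | ]. by apply: (inN2 (w1 := 1) (w2 := 0)); arith.
case/orP => [/eqP -> | ]. by apply: (inN2 (w1 := p) (w2 := 0)); arith.
move=> /eqP ->. by apply: (inN2 (w1 := p) (w2 := 0)); arith.
Qed.

End Torus.


Definition posof (k a : nat) :=
  if a == 0 then 0 else if a == 1 then 1 else if a == k then 2
  else if a == k.-1 then 3 else if a == k.-2 then 4 else 5.

Definition vdat (al mu ps d : nat) : nat * bool :=
  match d with
  | 0 => (al, ps == 2)
  | 1 => if ps == 2 then (0, false) else ((al + 1) %% 4, ps == 3)
  | 2 => if ps == 0 then ((mu + 3) %% 4, true) else ((al + 3) %% 4, false)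
  | 3 => if ps == 2 then (1, false) else if ps == 3 then (0, false) else ((al + 2) %% 4, ps == 4)
  | _ => if ps == 0 then ((mu + 2) %% 4, false) else if ps == 1 then ((mu + 3) %% 4, true)
         else ((al + 2) %% 4, false)
  end.

Definition vrow al mu ps d : bool * bool :=
  let z := vdat al mu ps d in (z.1 == 0, (z.1 == 2) || ((mu == 2) && z.2)).

Definition consb al mu ps :=
  [&& al < 4, mu < 4, ps < 6, (ps == 0) ==> (al == 0), (ps == 1) ==> (al == 1),
      (ps == 2) ==> (al == (mu + 3) %% 4), (ps == 3) ==> (al == (mu + 2) %% 4)
    & (ps == 4) ==> (al == (mu + 1) %% 4)].

Lemma check : all (fun al => all (fun mu => all (fun ps => consb al mu ps ==>
   all (fun be => all (fun nu => all (fun qs => consb be nu qs ==>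
       F (vrow al mu ps) (vrow be nu qs)) (iota 0 6)) (iota 0 4)) (iota 0 4))
   (iota 0 6)) (iota 0 4)) (iota 0 4).
Proof. by vm_compute. Qed.

Ltac case_ifs := repeat match goal with
  | |- context [if ?a == ?b then _ else _] =>
      (lazymatch a with context [if _ then _ else _] => fail | _ => idtac end);
      case: (a =P b) => ?; rewrite /=
  end.

Lemma consb_real k x : 4 <= k -> x <= k -> consb (x %% 4) (k.+1 %% 4) (posof k x).
Proof. move=> hk hx; rewrite /consb /posof; case_ifs; lia. Qed.

Definition A0 k : {set 'I_k.+1} := [set i : 'I_k.+1 | i %% 4 == 0].
Definition A1 k : {set 'I_k.+1} := [set i : 'I_k.+1 | (i %% 4 == 2) || ((k.+1 %% 4 == 2) && (i == k :> nat))].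

Lemma vdat_real k (a : 'I_k.+1) d : 4 <= k -> d < 5 ->
  (rot (offK k d) a : nat) %% 4 = (vdat (a %% 4) (k.+1 %% 4) (posof k a) d).1 /\
  ((rot (offK k d) a : nat) == k) = (vdat (a %% 4) (k.+1 %% 4) (posof k a) d).2.
Proof.
move=> hk; rewrite rotE; have := ltn_ord a; move: (nat_of_ord a) => x hx.
case: d => [|[|[|[|[|d]]]]] // _; rewrite /offK /vdat /posof /=; case_ifs; elim_mod; split; lia.
Qed.

Lemma F_ext r c r' c' : (forall d, d < 5 -> r d = r' d) -> (forall d, d < 5 -> c d = c' d) ->
  F r c = F r' c'.
Proof. by move=> hr hc; rewrite /F /sb /L8i /= !hr ?hc. Qed.

Lemma check' al mu ps be nu qs : consb al mu ps -> consb be nu qs ->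
  F (vrow al mu ps) (vrow be nu qs).
Proof.
move=> h1 h2; have := check.
have m4 : forall x, x < 4 -> x \in iota 0 4 by move=> x; rewrite mem_iota.
have m6 : forall x, x < 6 -> x \in iota 0 6 by move=> x; rewrite mem_iota.
have /and3P [a1 a2 /andP [a3 _]] := h1.
have /and3P [b1 b2 /andP [b3 _]] := h2.
move=> /allP H; move: (H al (m4 _ a1)) => {H} /allP H; move: (H mu (m4 _ a2)) => {H} /allP H.
move: (H ps (m6 _ a3)) => {H}; rewrite h1 implyTb => /allP H; move: (H be (m4 _ b1)) => {H} /allP H.
move: (H nu (m4 _ b2)) => {H} /allP H; move: (H qs (m6 _ b3)).
by rewrite h2 implyTb.
Qed.

Lemma row_real k (a : 'I_k.+1) d : 4 <= k -> d < 5 ->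
  (rot (offK k d) a \in A0 k, rot (offK k d) a \in A1 k) = vrow (a %% 4) (k.+1 %% 4) (posof k a) d.
Proof.
move=> hk hd; have [h1 h2] := vdat_real a hk hd.
by rewrite /vrow !inE h1 h2.
Qed.

Lemma card_div4 K (A : {set 'I_K}) c :
  {in A &, forall i j : 'I_K, i %/ 4 = j %/ 4 -> i = j :> nat} ->
  (forall i : 'I_K, i \in A -> i %/ 4 < c) -> #|A| <= c.
Proof.
move=> inj lt; rewrite cardE -(size_map (fun i : 'I_K => i %/ 4)) -[c](size_iota 0).
apply: uniq_leq_size.
  rewrite map_inj_in_uniq ?enum_uniq // => i j; rewrite !mem_enum => hi hj h.
  exact/val_inj/(inj _ _ hi hj h).
by move=> x /mapP [i]; rewrite mem_enum => /lt ? ->; rewrite mem_iota.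
Qed.

Lemma card_A0 k : #|A0 k| <= ceil_div k.+1 4.
Proof.
apply: card_div4 => [i j|i]; rewrite /A0 /ceil_div !inE /=.
  move=> hi hj h; lia.
have := ltn_ord i; lia.
Qed.

Lemma card_A1 k : #|A1 k| <= ceil_div k.+1 4.
Proof.
apply: card_div4 => [i j|i]; rewrite /A1 /ceil_div !inE /=.
  have := ltn_ord i; have := ltn_ord j; move=> hi' hj' hi hj h; lia.
have := ltn_ord i; lia.
Qed.

Lemma bigmin_le (I : eqType) (r : seq I) (P : pred I) (G : I -> nat) x0 j :
  j \in r -> P j -> \big[minn/x0]_(i <- r | P i) G i <= G j.
Proof.
elim: r => // a r IH; rewrite inE big_cons => /orP [/eqP <- ->|jr Pj]; first exact: geq_minl.
case: ifP => _; last exact: IH.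
by rewrite geq_min IH ?orbT.
Qed.

Lemma upper p q : 4 <= p -> 4 <= q ->
  gamma2d _ (torus_adj p.+1 q.+1) <= 2 * ceil_div p.+1 4 * ceil_div q.+1 4.
Proof.
move=> hp hq.
set S := setX (A0 p) (A0 q) :|: setX (A1 p) (A1 q).
have domS : disjunctive_dominating (torus_adj p.+1 q.+1) S.
  apply/forallP => v; apply: (dom_gen hp hq).
  rewrite (@F_ext _ _ (vrow (v.1 %% 4) (p.+1 %% 4) (posof p v.1)) (vrow (v.2 %% 4) (q.+1 %% 4) (posof q v.2))).
  - by apply: check'; apply: consb_real => //; rewrite -ltnS; exact: ltn_ord.
  - by move=> d hd; exact: row_real.
  - by move=> d hd; exact: row_real.
apply: (@leq_trans #|S|).
  by rewrite /gamma2d; apply: bigmin_le; rewrite ?mem_index_enum.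
rewrite (leq_trans (leq_card_setU _ _)) // !cardsX -mulnA mul2n -addnn.
by apply: leq_add; apply: leq_mul; rewrite ?card_A0 ?card_A1.
Qed.

Theorem theorem1 (m n : nat) (hm : 5 <= m) (hn : 5 <= n) :
  m * n <= 9 * gamma2d _ (torus_adj m n) /\
  gamma2d _ (torus_adj m n) <= 2 * ceil_div m 4 * ceil_div n 4.
Proof.
case: m hm => [|p] // hp; case: n hn => [|q] // hq.
split; last exact: upper.
rewrite /gamma2d; apply: (big_ind (fun x => p.+1 * q.+1 <= 9 * x)).
- by rewrite card_prod !card_ord leq_pmull.
- move=> x y hx hy; rewrite /minn; by case: ifP.
- by move=> S /(lower hp hq).
Qed.
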